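(* Let $P$ be an ergodic transition matrix on a finite set $\mathcal{X}$ with pseudo-spectral gap $\gamma_{\mathsf{ps}}$ and let $k_{\mathsf{ps}}$ be as defined below. For every integer $p\ge 1$, $$p\,\gamma_{\mathsf{ps}}\Big(1-\frac{p\,k_{\mathsf{ps}}\gamma_{\mathsf{ps}}}{2}\Big)<\gamma^{(p)}_{\mathsf{ps}}\le p\,\gamma_{\mathsf{ps}} .$$ Consequently, if $p\le 1/(k_{\mathsf{ps}}\gamma_{\mathsf{ps}})$, then $\gamma^{(p)}_{\mathsf{ps}}\ge p\gamma_{\mathsf{ps}}/2$.
   Context: $P$ is row-stochastic on finite $\mathcal{X}$, ergodic (primitive), with unique stationary distribution $\pi>0$. The time reversal is $P^\star(x,x')=\pi(x')P(x',x)/\pi(x)$. For a transition matrix $Q$ with stationary distribution $\pi$, $Q^\star Q$ is self-adjoint in $\ell_2(\pi)$ (inner product $\sum_x f(x)g(x)\pi(x)$) with real eigenvalues $1=\lambda_1\ge\lambda_2\ge\dots\ge 0$ counted with multiplicity, and $\gamma_\dagger(Q)\doteq 1-\lambda_2(Q^\star Q)$. The pseudo-spectral gap is $\gamma_{\mathsf{ps}}(P)=\max_{k\ge 1}\gamma_\dagger(P^k)/k$ (a maximum which is attained and positive for ergodic $P$); $\gamma_{\mathsf{ps}}=\gamma_{\mathsf{ps}}(P)$, $k_{\mathsf{ps}}$ is the smallest integer $k$ with $\gamma_{\mathsf{ps}}=\gamma_\dagger(P^{k})/k$, and $\gamma^{(p)}_{\mathsf{ps}}\doteq\gamma_{\mathsf{ps}}(P^p)$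 is the pseudo-spectral gap of the $p$-skipped chain with transition matrix $P^p$. *)

(* Defs.v *)
From HB Require Import structures.
From mathcomp Require Import all_boot all_order all_algebra.
From mathcomp Require Import boolp classical_sets reals.
Set Implicit Arguments. Unset Strict Implicit. Unset Printing Implicit Defensive.
Import Order.TTheory GRing.Theory Num.Theory.
Local Open Scope ring_scope.
Local Open Scope classical_set_scope.

Section Defs.
Variables (R : realType) (n : nat).

Definition row_stochastic (P : 'M[R]_n) : Prop :=
  (forall i j, 0 <= P i j) /\ (forall i, \sum_j P i j = 1).

(* ergodic = primitive: some power has all entries positive *)
Definition primitive (P : 'M[R]_n) : Prop :=
  exists k : nat, forall i j, 0 < (P ^+ k) i j.

Definition stationary_dist (P : 'M[R]_n) (pi : 'rV[R]_n) : Prop :=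
  (forall i, 0 <= pi 0 i) /\ \sum_i pi 0 i = 1 /\ pi *m P = pi.

Definition time_reversal (pi : 'rV[R]_n) (Q : 'M[R]_n) : 'M[R]_n :=
  \matrix_(i, j) (pi 0 j * Q j i / pi 0 i).

Definition eigenvalues_desc (M : 'M[R]_n) : seq R :=
  xget [::] [set s : seq R | sorted (fun x y => y <= x) s /\
                             char_poly M = \prod_(x <- s) ('X - x%:P)].

Definition lambda2 (M : 'M[R]_n) : R := nth 0 (eigenvalues_desc M) 1.

Definition gamma_dagger (pi : 'rV[R]_n) (Q : 'M[R]_n) : R :=
  1 - lambda2 (time_reversal pi Q *m Q).

(* pseudo-spectral gap: max_{k >= 1} gamma_dagger(P^k)/k (attained; = sup) *)
Definition gamma_ps (pi : 'rV[R]_n) (P : 'M[R]_n) : R :=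
  sup [set x : R | exists2 k : nat, (0 < k)%N & x = gamma_dagger pi (P ^+ k) / k%:R].

Definition k_ps (pi : 'rV[R]_n) (P : 'M[R]_n) : nat :=
  xget 0%N [set k : nat | [/\ (0 < k)%N,
     gamma_dagger pi (P ^+ k) / k%:R = gamma_ps pi P &
     forall j : nat, (0 < j)%N -> gamma_dagger pi (P ^+ j) / j%:R = gamma_ps pi P ->
                     (k <= j)%N]].

End Defs.

(* Main.v *)
Require Import Defs.
From HB Require Import structures.
From mathcomp Require Import all_boot all_order all_algebra.
From mathcomp Require Import boolp classical_sets reals.
From mathcomp Require Import complex.
From mathcomp Require Import ring lra.
Import Order.TTheory GRing.Theory Num.Theory.
Set Implicit Arguments. Unset Strict Implicit. Unset Printing Implicit Defensive.
Local Open Scope ring_scope.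
Local Open Scope classical_set_scope.
Lemma prodXsubC_perm (F : idomainType) (s t : seq F) :
  \prod_(x <- s) ('X - x%:P) = \prod_(x <- t) ('X - x%:P) -> perm_eq s t.
Proof.
elim: s t => [|a s IH] t.
  rewrite big_nil => /(congr1 (fun p : {poly F} => size p)) /=; rewrite size_poly1.
  rewrite (size_prod_XsubC _ id). by case: t.
rewrite big_cons => E.
have aint : a \in t.
  have : root (\prod_(x <- t) ('X - x%:P)) a by rewrite -E rootM root_XsubC eqxx.
  by rewrite root_prod_XsubC.
have pt := perm_to_rem aint.
rewrite (perm_big _ pt) /= big_cons in E.
apply: (@perm_trans _ (a :: rem a t)); last by rewrite perm_sym.
rewrite perm_cons; apply: IH.
by apply: (mulfI _ E); rewrite polyXsubC_eq0.
Qed.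

Section Eig.
Variables (R : realType) (n : nat).

Lemma eig_desc_eq (M : 'M[R]_n) (r : 'I_n -> R) :
  char_poly M = \prod_i ('X - (r i)%:P) ->
  eigenvalues_desc M = [seq r i | i <- sort (fun i j => r j <= r i) (enum 'I_n)].
Proof.
move=> cM.
have tr : transitive (fun x y : R => y <= x).
  by move=> a b c /= h1 h2; exact: le_trans h2 h1.
set t := sort _ _.
have st : sorted (fun x y : R => y <= x) [seq r i | i <- t].
  rewrite sorted_map; apply: sort_sorted => i j /=; exact: le_total.
have pt : \prod_(x <- [seq r i | i <- t]) ('X - x%:P) = char_poly M.
  rewrite big_map (perm_big _ (permEl (perm_sort _ _))) /= cM big_enum //.
have P0 : [set s : seq R | sorted (fun x y => y <= x) s /\
                             char_poly M = \prod_(x <- s) ('X - x%:P)]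
           [seq r i | i <- t] by split.
have := xgetI [::] P0; rewrite /eigenvalues_desc; set s := xget _ _.
move=> [ss ps]; apply: (sorted_eq tr) => //.
  by move=> a b /andP[h1 h2]; apply/eqP; rewrite eq_le h1 h2.
by apply: prodXsubC_perm; rewrite -ps pt.
Qed.

Lemma lambda2_facts (M : 'M[R]_n) (r : 'I_n -> R) :
  char_poly M = \prod_i ('X - (r i)%:P) ->
  [/\ (forall i j, i != j -> r i <= lambda2 M \/ r j <= lambda2 M),
      ((1 < n)%N -> exists i1 i2, [/\ i1 != i2, lambda2 M <= r i1 & lambda2 M = r i2]) &
      ((n < 2)%N -> lambda2 M = 0)].
Proof.
move=> cM; rewrite /lambda2 (eig_desc_eq cM).
set t := sort _ _.
have pt : perm_eq t (enum 'I_n) by rewrite perm_sort.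
have ut : uniq t by rewrite (perm_uniq pt) enum_uniq.
have szt : size t = n by rewrite (perm_size pt) size_enum_ord.
have st : sorted (fun x y : R => y <= x) [seq r i | i <- t].
  rewrite sorted_map; apply: sort_sorted => i j /=; exact: le_total.
have tr : transitive (fun x y : R => y <= x).
  by move=> a b c /= h1 h2; exact: le_trans h2 h1.
have key : forall a b, (a <= b < n)%N ->
    [seq r i | i <- t]`_b <= [seq r i | i <- t]`_a.
  move=> a b /andP[ab bn].
  have := sorted_leq_nth tr (fun x => le_refl x) 0 st.
  move=> /(_ a b); rewrite !inE size_map szt; apply => //.
  exact: leq_ltn_trans ab bn.
split.
- move=> i j ij.
  have it : i \in t by rewrite (perm_mem pt) mem_enum.
  have jt : j \in t by rewrite (perm_mem pt) mem_enum.
  have ri : r i = [seq r i | i <- t]`_(index i t).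
    by rewrite (nth_map i) ?index_mem // nth_index.
  have rj : r j = [seq r i | i <- t]`_(index j t).
    by rewrite (nth_map i) ?index_mem // nth_index.
  have ia : (index i t < n)%N by rewrite -[X in (_ < X)%N]szt index_mem.
  have ja : (index j t < n)%N by rewrite -[X in (_ < X)%N]szt index_mem.
  have nij : index i t != index j t.
    by apply: contra ij => /eqP h; apply/eqP; rewrite -(nth_index i it) h nth_index.
  case: (posnP (index i t)) => hi.
    right; rewrite rj; apply: key; rewrite ja andbT lt0n.
    by apply: contra nij => /eqP ->; rewrite hi.
  by left; rewrite ri; apply: key; rewrite ia andbT.
- move=> n2; have t0 : (0 < size t)%N by rewrite szt; exact: ltn_trans n2.
  have t1 : (1 < size t)%N by rewrite szt.
  pose i0 : 'I_n := Ordinal (ltnW n2).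
  exists (nth i0 t 0), (nth i0 t 1); split.
  + by rewrite nth_uniq.
  + rewrite -!(nth_map i0 0) //; apply: key; by rewrite -[X in (_ < X)%N]szt t1.
  + by rewrite (nth_map i0).
- move=> n2; rewrite nth_default // size_map szt.
  by case: n n2 {M cM r t pt ut szt st key} => [|[|]].
Qed.
End Eig.
Lemma char_poly_conj (F : fieldType) (n : nat) (A P Pi : 'M[F]_n) :
  Pi *m P = 1%:M -> char_poly (Pi *m A *m P) = char_poly A.
Proof.
move=> hPi.
have e : char_poly_mx (Pi *m A *m P) =
   map_mx polyC Pi *m char_poly_mx A *m map_mx polyC P.
  rewrite /char_poly_mx !map_mxM mulmxBr mulmxBl.
  congr (_ - _).
    by rewrite mul_mx_scalar -scalemxAl -map_mxM hPi map_mx1 scalemx1.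
rewrite /char_poly e !det_mulmx mulrC mulrA -det_mulmx -map_mxM.
have hP : P *m Pi = 1%:M by apply: mulmx1C.
by rewrite hP map_mx1 det1 mul1r.
Qed.
Definition ct (C : numClosedFieldType) m k (A : 'M[C]_(m,k)) : 'M[C]_(k,m) :=
  map_mx Num.Def.conjC A^T.

Lemma ct_mul (C : numClosedFieldType) m k l (A : 'M[C]_(m,k)) (B : 'M[C]_(k,l)) :
  ct (A *m B) = ct B *m ct A.
Proof. by rewrite /ct trmx_mul map_mxM. Qed.

Lemma ctK (C : numClosedFieldType) m k (A : 'M[C]_(m,k)) : ct (ct A) = A.
Proof. by apply/matrixP => i j; rewrite !mxE conjCK. Qed.

Section Key.
Variables (R : realType) (n : nat).
Local Notation C := (complex R).
Local Notation toC := (real_complex R).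

Lemma toC_real (x : R) : toC x \is Num.real.
Proof. by rewrite /real_complex_def complex_real. Qed.

Lemma conj_toC (x : R) : (toC x)^* = toC x.
Proof. exact: conj_Creal (toC_real x). Qed.

Lemma ct_toC m k (A : 'M[R]_(m,k)) : ct (map_mx toC A) = map_mx toC A^T.
Proof. by apply/matrixP => i j; rewrite !mxE conj_toC. Qed.

Lemma sqnorm_rv (v : 'rV[R]_n) : (v *m v^T) 0 0 = \sum_j v 0 j ^+ 2.
Proof. by rewrite mxE; apply: eq_bigr => j _; rewrite mxE expr2. Qed.

Lemma sqnorm_gt0 (v : 'rV[R]_n) : v != 0 -> 0 < (v *m v^T) 0 0.
Proof.
move=> vn0; rewrite sqnorm_rv.
have [j vj] : exists j, v 0 j != 0.
  apply/existsP; apply: contraR vn0 => /existsPn h.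
  by apply/eqP/rowP => j; rewrite mxE; apply/eqP/negPn/h.
rewrite (bigD1 j) //= ltr_pwDl ?sumr_ge0 //; first by rewrite lt_def sqrf_eq0 vj sqr_ge0.
by move=> k _; exact: sqr_ge0.
Qed.

Variables (S : 'M[R]_n) (u : 'rV[R]_n).
Hypotheses (Ssym : S^T = S) (u1 : (u *m u^T) 0 0 = 1) (uS : u *m S = u)
  (hpsd : forall v : 'rV[R]_n, 0 <= (v *m S *m v^T) 0 0 <= (v *m v^T) 0 0).

Let SC := map_mx toC S.

Lemma SC_herm : SC \is hermsymmx.
Proof.
apply: realsym_hermsym.
  apply/is_hermitianmxP; rewrite expr0 scale1r.
  apply/matrixP => i j; rewrite !mxE /=.
  by rewrite -[in RHS]Ssym mxE.
by apply/mxOverP => i j; rewrite mxE toC_real.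
Qed.

Let P := spectralmx SC.
Let d := spectral_diag SC.

Lemma P_unit1 : P *m ct P = 1%:M.
Proof. exact/unitarymxP/spectral_unitarymx. Qed.

Lemma P_unit2 : ct P *m P = 1%:M.
Proof. exact: mulmx1C P_unit1. Qed.

Lemma SC_dec : SC = ct P *m diag_mx d *m P.
Proof.
have := orthomx_spectralP (A := SC); rewrite -/P -/d.
move=> h; have {}h := elimT h (hermitian_normalmx SC_herm).
by rewrite {1}h invmx_unitary // spectral_unitarymx.
Qed.

Definition rr (i : 'I_n) : R := complex.Re (d 0 i).

Lemma d_rr i : d 0 i = toC (rr i).
Proof.
rewrite /rr RRe_real //.
by have /mxOverP := hermitian_spectral_diag_real SC_herm; apply.
Qed.

Lemma charS : char_poly S = \prod_i ('X - (rr i)%:P).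
Proof.
apply: (@map_poly_inj _ _ toC).
rewrite map_char_poly -/SC SC_dec char_poly_conj ?P_unit2 //.
rewrite char_poly_trig ?diag_mx_is_trig // rmorph_prod /=.
by apply: eq_bigr => i _; rewrite map_polyXsubC mxE eqxx mulr1n d_rr.
Qed.

Lemma rr_bounds i : 0 <= rr i <= 1.
Proof.
have : root (char_poly S) (rr i).
  by rewrite charS (bigD1 i) //= rootM root_XsubC eqxx.
rewrite -eigenvalue_root_char => /eigenvalueP [v vS vn0].
have := hpsd v; rewrite vS -scalemxAl mxE.
have := sqnorm_gt0 vn0; set N := (v *m v^T) 0 0 => N0.
by rewrite (pmulr_lge0 _ N0) -{2}[N]mul1r ler_pM2r.
Qed.


Lemma inner_sum (y z : 'rV[C]_n) : (y *m ct z) 0 0 = \sum_k y 0 k * (z 0 k)^*.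
Proof. by rewrite mxE; apply: eq_bigr => k _; rewrite !mxE. Qed.

Lemma quad_diag (y : 'rV[C]_n) (dd : 'rV[C]_n) :
  (y *m diag_mx dd *m ct y) 0 0 = \sum_k dd 0 k * (y 0 k * (y 0 k)^*).
Proof.
rewrite mul_mx_diag inner_sum; apply: eq_bigr => k _.
by rewrite mxE mulrCA mulrA.
Qed.

Let Qf (x : 'rV[C]_n) := (x *m SC *m ct x) 0 0.

Lemma Q_sum (x : 'rV[C]_n) : Qf x = \sum_k toC (rr k) *
   ((x *m ct P) 0 k * ((x *m ct P) 0 k)^*).
Proof.
rewrite (eq_bigr (fun k => d 0 k * ((x *m ct P) 0 k * ((x *m ct P) 0 k)^* ))); last first.
  by move=> k _; rewrite d_rr.
by rewrite /Qf SC_dec -quad_diag ct_mul ctK !mulmxA.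
Qed.

Lemma inner_P (x w : 'rV[C]_n) : (x *m ct w) 0 0 = ((x *m ct P) *m ct (w *m ct P)) 0 0.
Proof. by rewrite ct_mul ctK mulmxA -(mulmxA x (ct P) P) P_unit2 mulmx1. Qed.

Let uC := map_mx toC u.
Let z := uC *m ct P.

Lemma zD k : z 0 k * toC (rr k) = z 0 k.
Proof.
have h : uC *m SC = uC by rewrite -map_mxM uS.
have : uC *m SC *m ct P = z by rewrite h.
rewrite SC_dec !mulmxA -(mulmxA _ P) P_unit1 mulmx1 -/z => /(congr1 (fun M : 'rV[C]_n => M 0 k)).
by rewrite mul_mx_diag mxE d_rr.
Qed.

Lemma z_neq0 : z != 0.
Proof.
apply/eqP => h.
have : uC = 0 by rewrite -[uC]mulmx1 -P_unit2 mulmxA -/z h mul0mx.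
move/(congr1 (map_mx (@complex.Re R))); rewrite map_mx0 -map_mx_comp.
rewrite map_mx_id // => u0.
by move: u1; rewrite u0 mul0mx mxE => /eqP; rewrite eq_sym oner_eq0.
Qed.


Lemma quad_bound (x : 'rV[C]_n) : (x *m ct uC) 0 0 = 0 ->
  Qf x <= toC (lambda2 S) * (x *m ct x) 0 0.
Proof.
move=> xu; rewrite Q_sum inner_P inner_sum mulr_sumr; apply: ler_sum => i _.
set y := x *m ct P.
have w0 : 0 <= y 0 i * (y 0 i)^* by apply: mul_conjC_ge0.
case: (leP (rr i) (lambda2 S)) => h.
  by apply: ler_wpM2r => //; rewrite lecR.
suff -> : y 0 i = 0 by rewrite mul0r !mulr0.
have [L1 _ _] := lambda2_facts charS.
have zj : forall j, j != i -> z 0 j = 0.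
  move=> j ji; have hj : rr j <= lambda2 S.
    have ij : i != j by rewrite eq_sym.
    by case: (L1 i j ij) => // h'; move: h; rewrite ltNge h'.
  have : z 0 j * (toC (rr j) - 1) = 0 by rewrite mulrBr zD mulr1 subrr.
  move/eqP; rewrite mulf_eq0 => /orP[/eqP //|].
  rewrite subr_eq0 -(rmorph1 toC) => /eqP/complexI ej.
  have /andP[_ hi] := rr_bounds i.
  by move: (lt_le_trans (le_lt_trans hj h) hi); rewrite ej ltxx.
have zi : z 0 i != 0.
  apply: contra z_neq0 => /eqP zi0; apply/eqP/rowP => k; rewrite [RHS]mxE.
  by case: (eqVneq k i) => [->|ki]; [exact: zi0 | exact: zj].
move: xu; rewrite inner_P inner_sum -/y -/z (bigD1 i) //= big1 ?addr0.
  by move/eqP; rewrite mulf_eq0 conjC_eq0 (negPf zi) orbF => /eqP.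
by move=> k ki; rewrite zj // conjC0 mulr0.
Qed.


Lemma quad_witness : (1 < n)%N -> exists x : 'rV[C]_n,
  [/\ x != 0, (x *m ct uC) 0 0 = 0 & toC (lambda2 S) * (x *m ct x) 0 0 <= Qf x].
Proof.
move=> n2; have [_ L2 _] := lambda2_facts charS.
have [i1 [i2 [i12 h1 h2]]] := L2 n2.
set c1 := (z 0 i1)^*; set c2 := (z 0 i2)^*.
pose a := if c1 == 0 then 1 else c2; pose b := if c1 == 0 then 0 else - c1.
pose y : 'rV[C]_n := \row_k (if k == i1 then a else if k == i2 then b else 0).
have i21 : (i2 == i1) = false by apply/negbTE; rewrite eq_sym.
have y1 : y 0 i1 = a by rewrite mxE eqxx.
have y2 : y 0 i2 = b by rewrite mxE i21 eqxx.
have yo : forall k, k != i1 -> k != i2 -> y 0 k = 0.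
  by move=> k k1 k2; rewrite mxE (negbTE k1) (negbTE k2).
have yP : y *m P *m ct P = y by rewrite -mulmxA P_unit1 mulmx1.
exists (y *m P); split.
- apply/eqP => x0; have y0 : y = 0 by rewrite -yP x0 mul0mx.
  have e1 : a = 0 by rewrite -y1 y0 mxE.
  have e2 : b = 0 by rewrite -y2 y0 mxE.
  move: e1 e2; rewrite /a /b; case: eqP => [_ /eqP|/eqP c10 _ /eqP].
    by rewrite oner_eq0.
  by rewrite oppr_eq0 (negbTE c10).
- rewrite inner_P yP inner_sum -/z (bigD1 i1) //= (bigD1 i2) /=; last by rewrite i21.
  rewrite big1 ?addr0; last first.
    by move=> k /andP[k1 k2]; rewrite yo // mul0r.
  rewrite y1 y2 -/c1 -/c2 /a /b; case: eqP => [->|_]; first by rewrite mul1r mul0r addr0.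
  by rewrite mulrC mulNr subrr.
- rewrite Q_sum inner_P yP inner_sum mulr_sumr; apply: ler_sum => k _.
  have w0 : 0 <= y 0 k * (y 0 k)^* by apply: mul_conjC_ge0.
  case: (eqVneq k i1) => [->|k1]; first by apply: ler_wpM2r => //; [exact: mul_conjC_ge0 | rewrite lecR].
  case: (eqVneq k i2) => [->|k2]; first by rewrite h2.
  by rewrite yo // mul0r !mulr0.
Qed.


Lemma toC_bil (M : 'M[R]_n) (v w : 'rV[R]_n) :
  (map_mx toC v *m map_mx toC M *m ct (map_mx toC w)) 0 0 = toC ((v *m M *m w^T) 0 0).
Proof. by rewrite ct_toC -!map_mxM mxE. Qed.

Lemma toC_inner (v w : 'rV[R]_n) :
  (map_mx toC v *m ct (map_mx toC w)) 0 0 = toC ((v *m w^T) 0 0).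
Proof. by rewrite ct_toC -!map_mxM mxE. Qed.

Lemma bil_sym (M : 'M[R]_n) (v w : 'rV[R]_n) : M^T = M ->
  (v *m M *m w^T) 0 0 = (w *m M *m v^T) 0 0.
Proof.
move=> MT; transitivity ((v *m M *m w^T)^T 0 0); first by rewrite [RHS]mxE.
by rewrite !trmx_mul trmxK MT mulmxA.
Qed.

Lemma real_bound (v : 'rV[R]_n) : (v *m u^T) 0 0 = 0 ->
  (v *m S *m v^T) 0 0 <= lambda2 S * (v *m v^T) 0 0.
Proof.
move=> vu; have := quad_bound (x := map_mx toC v).
rewrite /uC toC_inner vu rmorph0 => /(_ erefl).
by rewrite /Qf toC_bil toC_inner -rmorphM lecR.
Qed.

Lemma split_vec (x : 'rV[C]_n) :
  x = map_mx toC (map_mx (@complex.Re R) x) + 'i *: map_mx toC (map_mx (@complex.Im R) x).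
Proof.
apply/matrixP => i j; rewrite !mxE -complexiE; exact: complexE.
Qed.

Lemma ct_split (a b : 'rV[R]_n) :
  ct (map_mx toC a + 'i *: map_mx toC b) = map_mx toC a^T - 'i *: map_mx toC b^T.
Proof.
apply/matrixP => i j; rewrite !mxE rmorphD rmorphM /= !conj_toC conjCi.
by rewrite mulNr.
Qed.

Lemma split_quad (M : 'M[R]_n) (a b : 'rV[R]_n) : M^T = M ->
  ((map_mx toC a + 'i *: map_mx toC b) *m map_mx toC M *m
     ct (map_mx toC a + 'i *: map_mx toC b)) 0 0 =
  toC ((a *m M *m a^T) 0 0) + toC ((b *m M *m b^T) 0 0).
Proof.
move=> MT.
have bs : b *m M *m a^T = a *m M *m b^T.
  have t1 : forall X : 'M[R]_1, X^T = X by move=> X; apply/matrixP => i j; rewrite !ord1 mxE.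
  by rewrite -[LHS]t1 !trmx_mul trmxK MT mulmxA.
rewrite ct_split !mulmxDl !mulmxBr -!scalemxAl -!scalemxAr -!map_mxM bs !mxE.
have h := @sqrCi C.
ring: h.
Qed.

Lemma split_inner (a b w : 'rV[R]_n) :
  ((map_mx toC a + 'i *: map_mx toC b) *m ct (map_mx toC w)) 0 0 =
  Complex ((a *m w^T) 0 0) ((b *m w^T) 0 0).
Proof.
rewrite mulmxDl -scalemxAl ct_toC -!map_mxM !mxE -complexiE; by simpc.
Qed.

Lemma real_witness : (1 < n)%N -> exists v : 'rV[R]_n,
  [/\ v != 0, (v *m u^T) 0 0 = 0 & lambda2 S * (v *m v^T) 0 0 <= (v *m S *m v^T) 0 0].
Proof.
move=> n2; have [x [xn0 xu hq]] := quad_witness n2.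
move: xn0 xu hq; rewrite /Qf (split_vec x).
set a := map_mx _ x; set b := map_mx _ x => xn0.
rewrite split_inner => -[pa pb].
have h1 := split_quad a b Ssym.
have h2 := split_quad a b (trmx1 _ _ : (1%:M : 'M[R]_n)^T = 1%:M).
rewrite map_mx1 mulmx1 in h2.
rewrite h1 h2 !mulmx1 -!rmorphD -rmorphM lecR => hq.
have a0q : a = 0 -> (a *m S *m a^T) 0 0 = 0 /\ (a *m a^T) 0 0 = 0.
  by move=> ->; rewrite !mul0mx mxE.
have b0q : b = 0 -> (b *m S *m b^T) 0 0 = 0 /\ (b *m b^T) 0 0 = 0.
  by move=> ->; rewrite !mul0mx mxE.
case: (eqVneq a 0) => [a0|an0].
  exists b; split => //.
    by apply: contraNneq xn0 => b0; rewrite a0 b0 !map_mx0 scaler0 addr0.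
  by move: hq; have [-> ->] := a0q a0; rewrite !add0r.
case: (lerP (lambda2 S * (a *m a^T) 0 0) ((a *m S *m a^T) 0 0)) => ha.
  by exists a.
exists b; split => //.
  by apply: contraTneq hq => b0; have [-> ->] := b0q b0; rewrite !addr0 -ltNge.
by move: hq ha; rewrite mulrDr; lra.
Qed.

End Key.

Section Bsec.
Variables (R : realType) (n : nat).

Definition nB (v : 'rV[R]_n) := (v *m v^T) 0 0.

Lemma nB_ge0 v : 0 <= nB v.
Proof. by rewrite /nB sqnorm_rv sumr_ge0 // => j _; exact: sqr_ge0. Qed.

Definition Bhyp (B : 'M[R]_n) (u : 'rV[R]_n) :=
  [/\ nB u = 1, u *m B = u, B *m u^T = u^T & forall v, nB (v *m B) <= nB v].

Lemma Bhyp_S B u : Bhyp B u ->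
  [/\ (B *m B^T)^T = B *m B^T, (u *m u^T) 0 0 = 1, u *m (B *m B^T) = u &
      forall v : 'rV[R]_n, 0 <= (v *m (B *m B^T) *m v^T) 0 0 <= (v *m v^T) 0 0].
Proof.
move=> [u1 uB Bu con]; split => //.
- by rewrite trmx_mul trmxK.
- by rewrite mulmxA uB -[u in RHS]trmxK -Bu trmx_mul trmxK.
- move=> v; have -> : v *m (B *m B^T) *m v^T = (v *m B) *m (v *m B)^T.
    by rewrite trmx_mul !mulmxA.
  by rewrite nB_ge0 con.
Qed.

Lemma lamB_bounds B u : Bhyp B u -> 0 <= lambda2 (B *m B^T) <= 1.
Proof.
move=> hB; have [Ss u1 uS ps] := Bhyp_S hB.
have [_ L2 L3] := lambda2_facts (charS Ss).
case: (ltnP 1 n) => n2.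
  have [i1 [i2 [_ _ ->]]] := L2 n2; exact: rr_bounds Ss ps _.
by rewrite L3 ?lexx ?ler01 // ltnS.
Qed.

Lemma Bhyp_pow B u k : Bhyp B u -> Bhyp (B ^+ k) u.
Proof.
move=> [u1 uB Bu con]; split => //.
- by elim: k => [|k IH]; rewrite ?expr0 ?mulmx1 // exprSr mulmxA IH uB.
- by elim: k => [|k IH]; rewrite ?expr0 ?mul1mx // exprS -mulmxA IH Bu.
- elim: k => [|k IH] v; first by rewrite expr0 mulmx1.
  by rewrite exprSr mulmxA; apply: le_trans (con _) (IH v).
Qed.

Lemma orth_B B u (w : 'rV[R]_n) : Bhyp B u ->
  (w *m u^T) 0 0 = 0 -> ((w *m B) *m u^T) 0 0 = 0.
Proof. by move=> [_ _ Bu _] wu; rewrite -mulmxA Bu. Qed.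

Lemma iterB B u : Bhyp B u -> forall j (w : 'rV[R]_n), (w *m u^T) 0 0 = 0 ->
  nB (w *m B ^+ j) <= lambda2 (B *m B^T) ^+ j * nB w.
Proof.
move=> hB; have [Ss u1 uS ps] := Bhyp_S hB.
have [l0 _] := andP (lamB_bounds hB).
elim=> [|j IH] w wu; first by rewrite expr0 mulmx1 expr0 mul1r.
rewrite exprS mulmxA exprSr -mulrA.
apply: le_trans (IH _ (orth_B hB wu)) _.
apply: ler_wpM2l; first exact: exprn_ge0.
have := real_bound Ss u1 uS ps wu.
by rewrite /nB trmx_mul !mulmxA.
Qed.

Lemma powB B u p : Bhyp B u ->
  lambda2 (B ^+ p *m (B ^+ p)^T) <= lambda2 (B *m B^T) ^+ p.
Proof.
move=> hB; have hBp := Bhyp_pow p hB.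
have [l0 _] := andP (lamB_bounds hB).
have [Ss u1 uS ps] := Bhyp_S hBp.
case: (ltnP 1 n) => n2; last first.
  have [_ _ L3] := lambda2_facts (charS Ss).
  by rewrite L3 ?exprn_ge0 // ltnS.
have [v [vn0 vu hv]] := real_witness u Ss n2.
have vp := sqnorm_gt0 vn0.
have := iterB hB p vu; rewrite /nB.
have -> : v *m B ^+ p *m (v *m B ^+ p)^T = v *m (B ^+ p *m (B ^+ p)^T) *m v^T.
  by rewrite trmx_mul !mulmxA.
move=> h; have := le_trans hv h.
by rewrite ler_pM2r.
Qed.

Lemma strictB B u : Bhyp B u ->
  (forall v, v != 0 -> (v *m u^T) 0 0 = 0 -> nB (v *m B) < nB v) ->
  lambda2 (B *m B^T) < 1.
Proof.
move=> hB hs; have [Ss u1 uS ps] := Bhyp_S hB.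
case: (ltnP 1 n) => n2; last first.
  have [_ _ L3] := lambda2_facts (charS Ss).
  by rewrite L3 ?ltr01 // ltnS.
have [v [vn0 vu hv]] := real_witness u Ss n2.
have vp := sqnorm_gt0 vn0.
have := hs v vn0 vu; rewrite /nB.
have -> : v *m B *m (v *m B)^T = v *m (B *m B^T) *m v^T.
  by rewrite trmx_mul !mulmxA.
move=> h; have := le_lt_trans hv h.
by rewrite -{2}(mul1r ((v *m v^T) 0 0)) ltr_pM2r.
Qed.

End Bsec.

Section Markov.
Variables (R : realType) (n : nat) (pi : 'rV[R]_n).
Hypothesis pipos : forall i, 0 < pi 0 i.
Hypothesis pisum : \sum_i pi 0 i = 1.

Definition sq i := Num.sqrt (pi 0 i).
Lemma sq_gt0 i : 0 < sq i. Proof. by rewrite sqrtr_gt0. Qed.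
Lemma sq_neq0 i : sq i != 0. Proof. by rewrite gt_eqF ?sq_gt0. Qed.
Lemma sq2 i : sq i ^+ 2 = pi 0 i. Proof. by rewrite sqr_sqrtr // ltW. Qed.

Definition W : 'M[R]_n := diag_mx (\row_i sq i).
Definition Wi : 'M[R]_n := diag_mx (\row_i (sq i)^-1).
Definition uu : 'rV[R]_n := \row_i sq i.

Lemma WWi : W *m Wi = 1%:M.
Proof.
apply/matrixP => i j; rewrite mul_diag_mx !mxE.
by case: eqP => [->|]; rewrite ?mulr1n ?mulr0n ?mulr0 // divff ?sq_neq0.
Qed.

Lemma WiW : Wi *m W = 1%:M.
Proof. exact: mulmx1C WWi. Qed.

Definition Bm (Q : 'M[R]_n) := Wi *m Q^T *m W.

Lemma BmE Q i j : Bm Q i j = (sq i)^-1 * Q j i * sq j.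
Proof. rewrite /Bm /W /Wi mul_mx_diag mxE mul_diag_mx. by rewrite !mxE. Qed.

Lemma trev_dec Q : time_reversal pi Q = Wi *m Wi *m Q^T *m W *m W.
Proof.
rewrite /W /Wi -(mulmxA (diag_mx _) (diag_mx _)).
apply/matrixP => i j; rewrite !mul_mx_diag !mul_diag_mx !mxE.
rewrite -(sq2 i) -(sq2 j) !expr2 invfM; field.
by rewrite !sq_neq0.
Qed.

Lemma tr_decomp Q : W *m (time_reversal pi Q *m Q) *m Wi = Bm Q *m (Bm Q)^T.
Proof.
rewrite trev_dec /Bm !trmx_mul trmxK !tr_diag_mx -/W -/Wi.
rewrite !mulmxA WWi mul1mx.
by rewrite -!mulmxA.
Qed.

Lemma lam_eq Q : lambda2 (time_reversal pi Q *m Q) = lambda2 (Bm Q *m (Bm Q)^T).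
Proof.
by rewrite -tr_decomp /lambda2 /eigenvalues_desc char_poly_conj // WWi.
Qed.

Lemma Bm_pow Q k : Bm (Q ^+ k) = (Bm Q) ^+ k.
Proof.
elim: k => [|k IH]; first by rewrite !expr0 /Bm trmx1 mulmx1 WiW.
rewrite exprSr exprS -IH /Bm -mulmxE trmx_mul.
by rewrite !mulmxA -(mulmxA _ W Wi) WWi mulmx1.
Qed.

Lemma nB_g (v : 'rV[R]_n) :
  nB v = \sum_i pi 0 i * (v 0 i / sq i) ^+ 2.
Proof.
rewrite /nB sqnorm_rv; apply: eq_bigr => i _.
by rewrite expr_div_n sq2 mulrCA divff ?mulr1 // gt_eqF.
Qed.

Lemma vB_entry Q (v : 'rV[R]_n) j :
  (v *m Bm Q) 0 j = sq j * \sum_i Q j i * (v 0 i / sq i).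
Proof.
rewrite mxE mulr_sumr; apply: eq_bigr => i _; rewrite BmE; ring.
Qed.

Variable Q : 'M[R]_n.
Hypothesis Qst : row_stochastic Q.
Hypothesis Qstat : pi *m Q = pi.

Let g (v : 'rV[R]_n) i := v 0 i / sq i.
Let m (v : 'rV[R]_n) j := \sum_i Q j i * g v i.

Lemma gap v : nB v - nB (v *m Bm Q) =
  \sum_j pi 0 j * \sum_i Q j i * (g v i - m v j) ^+ 2.
Proof.
have e1 : nB (v *m Bm Q) = \sum_j pi 0 j * m v j ^+ 2.
  rewrite /nB sqnorm_rv; apply: eq_bigr => j _.
  by rewrite vB_entry exprMn sq2.
have e2 : nB v = \sum_j pi 0 j * \sum_i Q j i * g v i ^+ 2.
  rewrite nB_g.
  under [RHS]eq_bigr do rewrite mulr_sumr.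
  rewrite exchange_big /=; apply: eq_bigr => i _.
  rewrite -/(g v i) -[in LHS](congr1 (fun M : 'rV_n => M 0 i) Qstat) mxE mulr_suml.
  by apply: eq_bigr => j _; rewrite mulrA.
rewrite e1 e2 -sumrB; apply: eq_bigr => j _.
rewrite -mulrBr; congr (_ * _).
have [_ rs] := Qst.
have key : forall (a : 'I_n -> R) (M : R), \sum_i Q j i * (a i - M) ^+ 2 =
    \sum_i Q j i * a i ^+ 2 - 2 * M * \sum_i Q j i * a i + M ^+ 2 * \sum_i Q j i.
  move=> a M; rewrite !mulr_sumr -sumrB -big_split /=; apply: eq_bigr => i _.
  ring.
rewrite key rs.
have -> : \sum_i Q j i * g v i = m v j by [].
ring.
Qed.

Lemma Bm_hyp : Bhyp (Bm Q) uu.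
Proof.
have [Q0 rs] := Qst.
split.
- rewrite /nB sqnorm_rv -pisum; apply: eq_bigr => i _; by rewrite mxE sq2.
- apply/rowP => j; rewrite vB_entry [RHS]mxE.
  under eq_bigr do rewrite mxE divff ?sq_neq0 // mulr1.
  by rewrite rs mulr1.
- apply/matrixP => i k; rewrite ord1 mxE !mxE.
  under eq_bigr do rewrite BmE !mxE.
  have e : pi 0 i = \sum_j pi 0 j * Q j i by rewrite -{1}Qstat mxE.
  transitivity ((sq i)^-1 * pi 0 i).
    rewrite e mulr_sumr; apply: eq_bigr => j _; rewrite -(sq2 j) expr2; ring.
  by rewrite -sq2 expr2 mulrA mulVf ?sq_neq0 ?mul1r.
- move=> v; rewrite -subr_ge0 gap; apply: sumr_ge0 => j _.
  apply: mulr_ge0; first exact: ltW.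
  by apply: sumr_ge0 => i _; apply: mulr_ge0 => //; exact: sqr_ge0.
Qed.

Lemma Bm_strict : (forall i j, 0 < Q i j) ->
  forall v, v != 0 -> (v *m uu^T) 0 0 = 0 -> nB (v *m Bm Q) < nB v.
Proof.
move=> Qpos v vn0 vu; rewrite -subr_gt0 gap.
rewrite lt_def; apply/andP; split; last first.
  apply: sumr_ge0 => j _; apply: mulr_ge0; first exact: ltW.
  by apply: sumr_ge0 => i _; apply: mulr_ge0; [exact: ltW | exact: sqr_ge0].
apply/negP => /eqP h0.
have nn : forall j, 0 <= pi 0 j * \sum_i Q j i * (g v i - m v j) ^+ 2.
  move=> j; apply: mulr_ge0; first exact: ltW.
  by apply: sumr_ge0 => i _; apply: mulr_ge0; [exact: ltW | exact: sqr_ge0].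
have t1 := psumr_eq0P (fun j _ => nn j) h0.
have hall : forall i j, g v i = m v j.
  move=> i j; have /eqP := t1 j isT.
  rewrite mulf_eq0 gt_eqF ?pipos //= => /eqP t2.
  have t3 : Q j i * (g v i - m v j) ^+ 2 = 0.
    apply: (psumr_eq0P _ t2) => // k _; apply: mulr_ge0; [exact: ltW | exact: sqr_ge0].
  move/eqP: t3; rewrite mulf_eq0 gt_eqF ?Qpos //= sqrf_eq0 subr_eq0.
  by move/eqP.
have [i0 vi0] : exists i0, v 0 i0 != 0.
  apply/existsP; apply: contraR vn0 => /existsPn h.
  by apply/eqP/rowP => j; rewrite mxE; apply/eqP/negPn/h.
have c0 : m v i0 = 0.
  move: vu; rewrite mxE.
  have -> : \sum_j v 0 j * uu^T j 0 = \sum_j m v i0 * pi 0 j.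
    apply: eq_bigr => j _; rewrite -(hall j i0) !mxE /g -(sq2 j) expr2.
    field; exact: sq_neq0.
  by rewrite -mulr_sumr pisum mulr1.
move: (hall i0 i0); rewrite c0 /g => /eqP; rewrite mulf_eq0 invr_eq0 (negbTE vi0).
by rewrite (negbTE (sq_neq0 i0)).
Qed.

End Markov.

Section Final.
Variables (R : realType) (n : nat).

Lemma stoch_pow (P : 'M[R]_n) k : row_stochastic P -> row_stochastic (P ^+ k).
Proof.
move=> [P0 Prs]; elim: k => [|k [IH0 IHrs]].
  rewrite expr0; split=> [i j|i]; first by rewrite mxE ler0n.
  rewrite (bigD1 i) //= mxE eqxx big1 ?addr0 // => j ji.
  by rewrite mxE eq_sym (negbTE ji).
rewrite exprSr -mulmxE; split=> [i j|i].
  by rewrite mxE; apply: sumr_ge0 => l _; apply: mulr_ge0.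
under eq_bigr do rewrite mxE.
rewrite exchange_big /= -(IHrs i); apply: eq_bigr => l _.
by rewrite -mulr_sumr Prs mulr1.
Qed.

Lemma stat_pow (P : 'M[R]_n) (pi : 'rV[R]_n) k : pi *m P = pi -> pi *m P ^+ k = pi.
Proof.
move=> hP; elim: k => [|k IH]; first by rewrite expr0 mulmx1.
by rewrite exprSr -mulmxE mulmxA IH hP.
Qed.

Lemma pos_pow (P : 'M[R]_n) k : row_stochastic P ->
  (forall i j, 0 < (P ^+ k) i j) -> forall i j, 0 < (P ^+ k.+1) i j.
Proof.
move=> [P0 Prs] hk i j; rewrite exprS -mulmxE mxE.
have [l Pil] : exists l, 0 < P i l.
  case: (pselect (exists l, 0 < P i l)) => // hn; exfalso.
  have : \sum_l P i l = 0.
    apply: big1 => l _; apply/eqP; rewrite eq_le P0 andbT leNgt.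
    by apply/negP => h; apply: hn; exists l.
  by rewrite Prs => /eqP; rewrite oner_eq0.
rewrite (bigD1 l) //= ltr_pwDl ?mulr_gt0 ?sumr_ge0 // => l' _.
by apply: mulr_ge0 => //; exact: ltW.
Qed.

Lemma bern (p : nat) (x : R) : 0 <= x <= 1 ->
  (1 - x) ^+ p <= 1 - p%:R * x + p%:R * (p%:R - 1) / 2 * x ^+ 2.
Proof.
move=> /andP[x0 x1]; elim: p => [|p IH]; first by rewrite expr0 !mul0r subr0 addr0.
have hc : 0 <= p%:R * (p%:R - 1) :> R.
  by case: p {IH} => [|p]; rewrite ?mul0r // mulr_ge0 // subr_ge0 ler1n.
rewrite exprSr; apply: le_trans (ler_wpM2r _ IH) _; first by rewrite subr_ge0.
have h3 := mulr_ge0 hc (exprn_ge0 3 x0).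
have e : 1 - p.+1%:R * x + p.+1%:R * (p.+1%:R - 1) / 2 * x ^+ 2 -
   (1 - p%:R * x + p%:R * (p%:R - 1) / 2 * x ^+ 2) * (1 - x) =
   p%:R * (p%:R - 1) * x ^+ 3 / 2 :> R.
  by rewrite -[(p.+1)%:R]natr1; field.
by rewrite -subr_ge0 e divr_ge0.
Qed.

Lemma fin_max (f : nat -> R) N : exists K, (0 < K <= N.+1)%N /\
  forall j, (0 < j <= N.+1)%N -> f j <= f K.
Proof.
elim: N => [|N [K [hK hmax]]].
  exists 1%N; split => // j /andP[j0 j1].
  by have -> : j = 1%N by apply/eqP; rewrite eqn_leq j1 j0.
case: (leP (f N.+2) (f K)) => h.
  exists K; split; first by case/andP: hK => -> /leqW.
  move=> j /andP[j0]; rewrite leq_eqVlt => /orP[/eqP ->//|]; rewrite ltnS => jN.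
  by apply: hmax; rewrite j0.
exists N.+2; split => [|j /andP[j0]]; first by rewrite leqnn.
rewrite leq_eqVlt => /orP[/eqP ->//|].
rewrite ltnS => jN; apply: le_trans (ltW h); apply: hmax; by rewrite j0.
Qed.

End Final.

Theorem mainTheorem4 (R : realType) (n : nat) (P : 'M[R]_n) (pi : 'rV[R]_n) :
  row_stochastic P -> primitive P ->
  stationary_dist P pi -> (forall i, 0 < pi 0 i) ->
  forall p : nat, (1 <= p)%N ->
    let g := gamma_ps pi P in
    let k := k_ps pi P in
    let gp := gamma_ps pi (P ^+ p) in
    (p%:R * g * (1 - p%:R * k%:R * g / 2) < gp /\ gp <= p%:R * g) /\
    (p%:R <= 1 / (k%:R * g) -> p%:R * g / 2 <= gp).
Proof.
move=> Pst [k0 Pk0] [pi0 [pis pistat]] pipos p p1 g k gp.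
pose B := Bm pi P.
have hB : Bhyp B (uu pi) := Bm_hyp pipos pis Pst pistat.
pose G j := gamma_dagger pi (P ^+ j).
have GE : forall j, G j = 1 - lambda2 (B ^+ j *m (B ^+ j)^T).
  by move=> j; rewrite /G /gamma_dagger (lam_eq pipos) (Bm_pow pipos).
have Gb : forall j, 0 <= G j <= 1.
  move=> j; rewrite GE; have /andP[l0 l1] := lamB_bounds (Bhyp_pow j hB).
  apply/andP; split; lra.
have G2 : forall K q, 1 - G (K * q) <= (1 - G K) ^+ q.
  have e1 : forall y : R, 1 - (1 - y) = y by move=> y; ring.
  move=> K q; rewrite !GE !e1 exprM.
  exact: powB q (Bhyp_pow K hB).
have [m [m0 Gm]] : exists m, (0 < m)%N /\ 0 < G m.
  exists k0.+1; split => //.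
  rewrite /G /gamma_dagger (lam_eq pipos) subr_gt0.
  have Pm := pos_pow Pst Pk0.
  have st := stoch_pow k0.+1 Pst.
  have sta := stat_pow k0.+1 pistat.
  exact: strictB (Bm_hyp pipos pis st sta) (Bm_strict pipos pis st sta Pm).
pose f j := G j / j%:R.
have fle : forall j, (0 < j)%N -> f j <= j%:R^-1.
  move=> j j0; rewrite /f ler_pdivrMr ?ltr0n // mulVf ?pnatr_eq0 -?lt0n //.
  by case/andP: (Gb j).
have fm : 0 < f m by rewrite /f divr_gt0 // ltr0n.
have [K [K0 Kmax]] : exists K, (0 < K)%N /\ forall j, (0 < j)%N -> f j <= f K.
  set a := f m.
  have [K [/andP[K0 KN] hK]] := fin_max f (Num.Def.trunc a^-1).
  exists K; split => // j j0.
  case: (leqP j (Num.Def.trunc a^-1).+1) => hj; first by apply: hK; rewrite j0.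
  have ha := truncnS_gt (a^-1).
  have mle : (m <= (Num.Def.trunc a^-1).+1)%N.
    rewrite -(ler_nat R); apply: ltW; apply: le_lt_trans ha.
    rewrite -[m%:R]invrK lef_pV2 ?posrE ?invr_gt0 ?ltr0n //.
    exact: fle.
  apply: le_trans (hK m _); last by rewrite m0 mle.
  apply: ltW; apply: le_lt_trans (fle j j0) _.
  rewrite -[X in _ < X]invrK ltf_pV2 ?posrE ?invr_gt0 ?ltr0n //.
  by apply: lt_trans ha _; rewrite ltr_nat.
set E := [set x : R | exists2 j : nat, (0 < j)%N & x = f j].
have gE : g = sup E by [].
have ubE : ubound E (f K) by move=> x [j j0 ->]; exact: Kmax.
have EK : E (f K) by exists K.
have gK : g = f K.
  apply/eqP; rewrite eq_le; apply/andP; split.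
    by rewrite gE; apply: ge_sup => //; exists (f K).
  by rewrite gE; apply: ub_le_sup => //; exists (f K).
have g0 : 0 < g by rewrite gK; apply: lt_le_trans fm (Kmax m m0).
have [kmin [kmin0 kminE]] : exists kk, (0 < kk)%N /\ f kk = g.
  by exists K; split.
have exk : exists kk : nat, [/\ (0 < kk)%N, gamma_dagger pi (P ^+ kk) / kk%:R = g &
     forall j : nat, (0 < j)%N -> gamma_dagger pi (P ^+ j) / j%:R = g -> (kk <= j)%N].
  have ex : exists kk, (0 < kk)%N && (f kk == g) by exists kmin; rewrite kmin0 kminE eqxx.
  have [kk /andP[kk0 /eqP kkE] kkmin] := ex_minnP ex.
  exists kk; split => // j j0 jE; apply: kkmin; rewrite j0; apply/eqP; exact: jE.
have [k0' kE _] : [/\ (0 < k)%N, gamma_dagger pi (P ^+ k) / k%:R = g &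
     forall j : nat, (0 < j)%N -> gamma_dagger pi (P ^+ j) / j%:R = g -> (k <= j)%N].
  have [kk hkk] := exk.
  pose SS := [set k : nat | [/\ (0 < k)%N,
     gamma_dagger pi (P ^+ k) / k%:R = gamma_ps pi P &
     forall j : nat, (0 < j)%N -> gamma_dagger pi (P ^+ j) / j%:R = gamma_ps pi P ->
                     (k <= j)%N]].
  have hS : SS kk by [].
  exact: (xgetI 0%N hS).
clearbody k.
have Gk : G k = k%:R * g.
  by rewrite -kE /G mulrC divfK // pnatr_eq0 -lt0n.
pose Ep := [set x : R | exists2 j : nat, (0 < j)%N & x = gamma_dagger pi ((P ^+ p) ^+ j) / j%:R].
have gpE : gp = sup Ep by reflexivity.
clearbody gp g.
have Epj : forall j, gamma_dagger pi ((P ^+ p) ^+ j) / j%:R = p%:R * f (p * j)%N.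
  move=> j; rewrite -exprM.
  change (G (p * j)%N / j%:R = p%:R * (G (p * j)%N / (p * j)%N%:R)).
  rewrite natrM.
  case: (posnP j) => [->|j0]; first by rewrite !mulr0 !invr0 !mulr0.
  have pn : (p%:R : R) != 0 by rewrite pnatr_eq0 -lt0n.
  have jn : (j%:R : R) != 0 by rewrite pnatr_eq0 -lt0n.
  by rewrite invfM mulrA (mulrC p%:R) -mulrA (mulrA p%:R) divff // mul1r mulrC.
have ubEp : ubound Ep (p%:R * g).
  move=> x [j j0 ->]; rewrite Epj gK; apply: ler_wpM2l; first exact: ler0n.
  by apply: Kmax; rewrite muln_gt0 p1.
have Ep1 : Ep (gamma_dagger pi ((P ^+ p) ^+ k) / k%:R) by exists k.
have up : gp <= p%:R * g by rewrite gpE; apply: ge_sup => //; exists (gamma_dagger pi ((P ^+ p) ^+ k) / k%:R).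
have low : gamma_dagger pi ((P ^+ p) ^+ k) / k%:R <= gp.
  by rewrite gpE; apply: ub_le_sup => //; exists (p%:R * g).
have kpos : (0 : R) < k%:R by rewrite ltr0n.
pose x := k%:R * g.
have x0 : 0 < x by rewrite mulr_gt0.
have x1 : x <= 1 by have := Gb k; rewrite Gk => /andP[].
have hG : 1 - (1 - x) ^+ p <= gamma_dagger pi ((P ^+ p) ^+ k).
  rewrite -exprM; change (1 - (1 - x) ^+ p <= G (p * k)%N).
  have := G2 k p; rewrite mulnC Gk -/x => h.
  by rewrite lerBlDr addrC -lerBlDr.
have hx : 0 <= x <= 1 by rewrite (ltW x0) x1.
have hb := bern (x:=x) p hx.
have cp : (1 : R) <= p%:R by rewrite ler1n.
have strict : p%:R * g * (1 - p%:R * k%:R * g / 2) < gp.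
  apply: lt_le_trans low.
  rewrite ltr_pdivlMr //.
  apply: lt_le_trans hG; apply: lt_le_trans (lerB (lexx 1) hb).
  have e : 1 - (1 - p%:R * x + p%:R * (p%:R - 1) / 2 * x ^+ 2) -
           p%:R * g * (1 - p%:R * k%:R * g / 2) * k%:R = p%:R * k%:R * x * g / 2.
    by rewrite /x; field.
  rewrite -subr_gt0 e; apply: divr_gt0 => //.
  by rewrite !mulr_gt0 ?ltr0n.
split; first by split.
move=> hp.
have hpk : p%:R * x <= 1.
  by move: hp; rewrite ler_pdivlMr // mul1r.
apply: le_trans (ltW strict).
have hgp : 0 <= p%:R * g by rewrite mulr_ge0 // ltW.
have : p%:R * g * (1 - p%:R * k%:R * g / 2) - p%:R * g / 2 =
       p%:R * g * (1 - p%:R * x) / 2 by rewrite /x; field.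
move=> e; rewrite -subr_ge0 e divr_ge0 // mulr_ge0 // subr_ge0 //.
Qed.
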